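(* Let $\mathbf{k}$ be a field and let $\mathfrak{B}=\mathbf{k}\langle g,x\rangle$ be the free algebra on $g,x$, made into a bialgebra by $\Delta(g)=g\otimes g$, $\Delta(x)=x\otimes 1+g\otimes x$, $\varepsilon(g)=1$, $\varepsilon(x)=0$. For integers $k,l\ge 0$ let $C_{k,l}$ be the sum of all monomials in $g,x$ containing exactly $k$ letters $g$ and $l$ letters $x$ (so $C_{0,0}=1$), and set $C_{k,l}=0$ if $k<0$ or $l<0$. Then for all integers $i,j\ge0$ and $n\ge1$, \[ (g^ix^j)^{[n+1]}=\sum_{\substack{k_1,\dots,k_n\ge 0\\ k_1+\cdots+k_n\le j}} g^iC_{k_1+\cdots+k_n,\,j-(k_1+\cdots+k_n)}\,g^iC_{k_1+\cdots+k_{n-1},\,k_n}\cdots g^iC_{k_1,k_2}\,g^iC_{0,k_1}. \]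
   Context: For an element $h$ of a bialgebra with multiplication $m$ and comultiplication $\Delta$, the $m$-th Sweedler power is $h^{[m]}=m^{(m)}\circ\Delta^{(m)}(h)$ for $m\ge1$, where $\Delta^{(1)}=\mathrm{id}$, $\Delta^{(m)}=(\Delta^{(m-1)}\otimes\mathrm{id})\circ\Delta$ for $m\ge2$, and $m^{(m)}(h_1\otimes\cdots\otimes h_m)=h_1\cdots h_m$. *)

(* Defs.v *)
From HB Require Import structures.
From mathcomp Require Import all_boot all_order all_algebra.
From mathcomp Require Import finmap.
From mathcomp Require Import monalg.

Set Implicit Arguments.
Unset Strict Implicit.
Unset Printing Implicit Defensive.

Import GRing.Theory.
Local Open Scope ring_scope.

(* Letters: [true] stands for g, [false] stands for x.
   Words (monomials) in g, x: the free monoid {fmonom bool}.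
   The free algebra k<g,x> is the monoid algebra {malg k[{fmonom bool}]}. *)
Definition word := {fmonom bool}.
Definition wg : word := fmu true.
Definition wx : word := fmu false.

Definition FA (K : fieldType) := {malg K[word]}.

(* n-tuples of words: the basis of the n-th tensor power of k<g,x>.
   They form a monoid under componentwise concatenation. *)
Record tmon (n : nat) : predArgType := TMon { tmval : {ffun 'I_n -> word} }.
HB.instance Definition _ n := [isNew for @tmval n].
HB.instance Definition _ n := [Choice of tmon n by <:].

Definition tone n : tmon n := TMon [ffun _ => mone].
Definition tmul n (s t : tmon n) : tmon n :=
  TMon [ffun i => mmul (tmval s i) (tmval t i)].

Lemma tmulA n : associative (@tmul n).
Proof. by move=> s t u; congr TMon; apply/ffunP=> i; rewrite !ffunE mulmA. Qed.
Lemma tmul1m n : left_id (@tone n) (@tmul n).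
Proof. by case=> f; congr TMon; apply/ffunP=> i; rewrite !ffunE mul1m. Qed.
Lemma tmulm1 n : right_id (@tone n) (@tmul n).
Proof. by case=> f; congr TMon; apply/ffunP=> i; rewrite !ffunE mulm1. Qed.
Lemma tmul_eq1 n (s t : tmon n) : tmul s t = tone n -> s = tone n /\ t = tone n.
Proof.
case: s t => [f] [h] [] /ffunP E; split; congr TMon; apply/ffunP=> i;
  have := E i; rewrite !ffunE => /unitm[A B]; by [rewrite A | rewrite B].
Qed.
HB.instance Definition _ n :=
  Choice_isMonomialDef.Build (tmon n) (@tmulA n) (@tmul1m n) (@tmulm1 n) (@tmul_eq1 n).

Definition TP (K : fieldType) n := {malg K[tmon n]}.

Definition single (w : word) : tmon 1 := TMon [ffun _ => w].
Definition tpair (u v : word) : tmon 2 :=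
  TMon [ffun i : 'I_2 => if i == ord0 then u else v].
Definition snoc n (s : tmon n) (v : word) : tmon n.+1 :=
  TMon [ffun i : 'I_n.+1 =>
          if unlift ord_max i is Some j then tmval s j else v].

Section Bialg.
Variable K : fieldType.

Definition Delta_letter (c : bool) : TP K 2 :=
  if c then << tpair wg wg >> else << tpair wx mone >> + << tpair wg wx >>.

Definition Delta_word (w : word) : TP K 2 :=
  \prod_(c <- fmonom_val w) Delta_letter c.

Definition Delta (a : FA K) : TP K 2 :=
  \sum_(w <- msupp a) a@_w *: Delta_word w.

Definition to_TP1 (a : FA K) : TP K 1 :=
  \sum_(w <- msupp a) a@_w *: << single w >>.

Definition tens_word n (X : TP K n) (v : word) : TP K n.+1 :=
  \sum_(t <- msupp X) X@_t *: << snoc t v >>.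

(* Deltan m = Delta^(m+1) : Delta^(1) = id,
   Delta^(m) = (Delta^(m-1) (x) id) o Delta. *)
Fixpoint Deltan (m : nat) (a : FA K) : TP K m.+1 :=
  if m is m'.+1 then
    \sum_(s <- msupp (Delta a))
       (Delta a)@_s *: tens_word (Deltan m' << tmval s ord0 >>) (tmval s ord_max)
  else to_TP1 a.

Definition multn n (X : TP K n) : FA K :=
  \sum_(t <- msupp X) X@_t *: << \big[mmul/mone]_(i < n) tmval t i >>.

Definition sweedler (h : FA K) (m : nat) : FA K := multn (Deltan m.-1 h).

Definition gA : FA K := << wg >>.
Definition xA : FA K := << wx >>.

Definition Ckl (k l : nat) : FA K :=
  \sum_(w : (k + l).-tuple bool | count id w == k) << FMonom (val w) >>.

(* right-hand side of the formula, with (k_1,...,k_n) = ks *)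
Definition rhs_term (i j n : nat) (ks : seq nat) : FA K :=
  \prod_(r < n.+1)
     (gA ^+ i * Ckl (sumn (take (n - r)%N ks)) (nth (j - sumn ks)%N ks (n - r)%N)).

End Bialg.

(* Main.v *)
Require Import Defs.
From HB Require Import structures.
From mathcomp Require Import all_boot all_order all_algebra.
From mathcomp Require Import finmap.
From mathcomp Require Import monalg.
Import GRing.Theory.
Local Open Scope ring_scope.

Set Implicit Arguments.
Unset Strict Implicit.
Unset Printing Implicit Defensive.

Section Lin.
Variable K : fieldType.

Definition islin (V W : lmodType K) (f : V -> W) :=
  forall c x y, f (c *: x + y) = c *: f x + f y.

Section LinT.
Variables (V W : lmodType K) (f : V -> W) (hf : islin f).
Lemma lin0 : f 0 = 0.
Proof.
have := hf 1 0 0; rewrite !scale1r addr0 => /(congr1 (fun z => z - f 0)).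
by rewrite subrr addrK => <-.
Qed.
Lemma linD x y : f (x + y) = f x + f y.
Proof. by have := hf 1 x y; rewrite !scale1r. Qed.
Lemma linZ c x : f (c *: x) = c *: f x.
Proof. by have := hf c x 0; rewrite !addr0 lin0 addr0. Qed.
Lemma lin_sum (I : Type) (r : seq I) (P : pred I) (F : I -> V) :
  f (\sum_(i <- r | P i) F i) = \sum_(i <- r | P i) f (F i).
Proof. exact: (big_morph f linD lin0). Qed.
End LinT.

Lemma lin_comp (U V W : lmodType K) (f : U -> V) (g : V -> W) :
  islin f -> islin g -> islin (fun x => g (f x)).
Proof. by move=> hf hg c x y; rewrite hf hg. Qed.

Section Lift.
Variables (M : choiceType) (V : lmodType K).

Definition mlift (F : M -> V) (a : {malg K[M]}) : V :=
  \sum_(m <- msupp a) a@_m *: F m.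

Lemma liftEw (F : M -> V) a (d : {fset M}) : (msupp a `<=` d)%fset ->
  mlift F a = \sum_(m <- d) a@_m *: F m.
Proof.
move=> le; rewrite /mlift (big_fset_incl _ le) // => m _ /mcoeff_outdom ->.
by rewrite scale0r.
Qed.

Lemma lift_lin (F : M -> V) : islin (mlift F).
Proof.
move=> c x y.
set d := (msupp x `|` msupp y `|` msupp (c *: x + y))%fset.
have h1 : (msupp x `<=` d)%fset by rewrite /d -fsetUA fsubsetUl.
have h2 : (msupp y `<=` d)%fset by rewrite /d fsetUC fsubsetU // fsubsetUr orbT.
have h3 : (msupp (c *: x + y) `<=` d)%fset by rewrite /d fsubsetUr.
rewrite (liftEw _ h1) (liftEw _ h2) (liftEw _ h3) scaler_sumr -big_split /=.
apply: eq_bigr => m _; rewrite mcoeffD mcoeffZ scalerDl scalerA //.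
Qed.

Lemma liftU (F : M -> V) c m : mlift F << c *g m >> = c *: F m.
Proof. by rewrite (liftEw _ msuppU_le) big_seq_fset1 mcoeffUU. Qed.

Lemma lift1 (F : M -> V) m : mlift F << m >> = F m.
Proof. by rewrite liftU scale1r. Qed.

Lemma lift_linfun (F G : M -> V) c a :
  mlift (fun m => c *: F m + G m) a = c *: mlift F a + mlift G a.
Proof.
by rewrite /mlift scaler_sumr -big_split; apply: eq_bigr => m _;
  rewrite scalerDr !scalerA mulrC.
Qed.

End Lift.

Lemma lift_comp (M : choiceType) (V W : lmodType K) (G : V -> W) (F : M -> V) a :
  islin G -> G (mlift F a) = mlift (fun m => G (F m)) a.
Proof.
by move=> hG; rewrite /mlift (lin_sum hG); apply: eq_bigr => m _; rewrite (linZ hG).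
Qed.

Lemma lift_ext (M : choiceType) (V : lmodType K) (F G : M -> V) a : F =1 G -> mlift F a = mlift G a.
Proof. by move=> e; apply: eq_bigr => m _; rewrite e. Qed.


Lemma malgUZ (M : choiceType) (c : K) (m : M) : << c *g m >> = c *: << m >> :> {malg K[M]}.
Proof.
apply/malgP => k; rewrite mcoeffZ !mcoeffU; case: (m == k) => //=.
by rewrite mulr1.
by rewrite mulr0.
Qed.

Lemma malg_expand (M : choiceType) (a : {malg K[M]}) : a = mlift (fun m => << m >>) a.
Proof.
by rewrite {1}(monalgE a); apply: eq_bigr => m _; rewrite malgUZ.
Qed.

Lemma lin_ext (M : choiceType) (W : lmodType K) (f g : {malg K[M]} -> W) :
  islin f -> islin g -> (forall m, f << m >> = g << m >>) -> forall a, f a = g a.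
Proof.
move=> hf hg e a; rewrite (malg_expand a) (lift_comp _ _ hf) (lift_comp _ _ hg).
exact: lift_ext.
Qed.

Lemma malgUU (M : monomType) (u v : M) : << u >> * << v >> = << mmul u v >> :> {malg K[M]}.
Proof. by rewrite malgM_def fgmulUU mulr1. Qed.

Lemma scalerAr_malg (M : monomType) c (x y : {malg K[M]}) : c *: (x * y) = x * (c *: y).
Proof.
apply/malgP => k; rewrite mcoeffZ (mcoeffMlw _ (fsubset_refl _) (msuppZ_le c y)).
rewrite (mcoeffMlw _ (fsubset_refl _) (fsubset_refl _)) mulr_sumr.
apply: eq_bigr => u _; rewrite mulr_sumr; apply: eq_bigr => v _.
by rewrite mcoeffZ mulrnAr mulrCA.
Qed.

Lemma islin_mulr (M : monomType) (y : {malg K[M]}) : islin (fun x : {malg K[M]} => x * y).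
Proof. by move=> c a b; rewrite mulrDl -scalerAl. Qed.
Lemma islin_mull (M : monomType) (y : {malg K[M]}) : islin (fun x : {malg K[M]} => y * x).
Proof. by move=> c a b; rewrite mulrDr scalerAr_malg. Qed.

End Lin.

Section Tens.
Variable K : fieldType.
Local Notation FA := (FA K).

Definition tens_def (A B : FA) : TP K 2 :=
  mlift (fun u => mlift (fun v => << tpair u v >>) B) A.
Fact tens_key : unit. Proof. by []. Qed.
Definition tens := locked_with tens_key tens_def.
Lemma tensE A B : tens A B = tens_def A B.
Proof. by rewrite [tens]unlock. Qed.

Lemma tens_linl B : islin (fun A => tens A B).
Proof. move=> c x y; rewrite !tensE; exact: lift_lin. Qed.

Lemma tens_linr A : islin (fun B => tens A B).
Proof.
move=> c x y; rewrite !tensE /tens_def -lift_linfun; apply: lift_ext => u.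
exact: lift_lin.
Qed.

Lemma tensDl A1 A2 B : tens (A1 + A2) B = tens A1 B + tens A2 B.
Proof. exact: (linD (tens_linl B)). Qed.
Lemma tensDr A B1 B2 : tens A (B1 + B2) = tens A B1 + tens A B2.
Proof. exact: (linD (tens_linr A)). Qed.
Lemma tens0l B : tens 0 B = 0.
Proof. exact: (lin0 (tens_linl B)). Qed.
Lemma tens0r A : tens A 0 = 0.
Proof. exact: (lin0 (tens_linr A)). Qed.

Lemma tensUU u v : tens << u >> << v >> = << tpair u v >>.
Proof. by rewrite tensE /tens_def !lift1. Qed.

Lemma tpairM u v u' v' :
  mmul (tpair u v) (tpair u' v') = tpair (mmul u u') (mmul v v').
Proof.
change (tmul (tpair u v) (tpair u' v') = tpair (mmul u u') (mmul v v')).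
rewrite /tmul /tpair /=; congr TMon; apply/ffunP => i; rewrite !ffunE.
by case: ifP.
Qed.

Lemma tpair11 : tpair mone mone = mone.
Proof.
change (tpair mone mone = tone 2).
by rewrite /tpair /tone; congr TMon; apply/ffunP => i; rewrite !ffunE; case: ifP.
Qed.

Lemma tpair0 u v : tmval (tpair u v) ord0 = u.
Proof. by rewrite /tpair /= ffunE. Qed.
Lemma tpair1 u v : tmval (tpair u v) ord_max = v.
Proof. by rewrite /tpair /= ffunE. Qed.

Lemma tensM_U u v A B :
  << tpair u v >> * tens A B = tens (<< u >> * A) (<< v >> * B).
Proof.
move: A; apply: (lin_ext (f := fun A => << tpair u v >> * tens A B)
                         (g := fun A => tens (<< u >> * A) (<< v >> * B))).
- exact: (lin_comp (tens_linl _) (islin_mull _)).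
- exact: (lin_comp (islin_mull _) (tens_linl _)).
move=> m; move: B.
apply: (lin_ext (f := fun B => << tpair u v >> * tens << m >> B)
                (g := fun B => tens (<< u >> * << m >>) (<< v >> * B))).
- exact: (lin_comp (tens_linr _) (islin_mull _)).
- exact: (lin_comp (islin_mull _) (tens_linr _)).
move=> m'; by rewrite !malgUU tensUU (@malgUU K _ (tpair u v)) tpairM tensUU.
Qed.

Lemma DeltaE (a : FA) : Delta a = mlift (@Delta_word K) a.
Proof. by []. Qed.

Lemma Delta_lin : islin (@Delta K).
Proof. exact: lift_lin. Qed.

Lemma DW_mul u v : Delta_word K (mmul u v) = Delta_word K u * Delta_word K v.
Proof. by rewrite /Delta_word fmM big_cat. Qed.

Lemma Delta_mul (A B : FA) : Delta (A * B) = Delta A * Delta B.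
Proof.
move: A; apply: (lin_ext (f := fun A => Delta (A * B))
                         (g := fun A => Delta A * Delta B)).
- exact: (lin_comp (islin_mulr _) Delta_lin).
- exact: (lin_comp Delta_lin (islin_mulr _)).
move=> m; move: B.
apply: (lin_ext (f := fun B => Delta (<< m >> * B))
                (g := fun B => Delta << m >> * Delta B)).
- exact: (lin_comp (islin_mull _) Delta_lin).
- exact: (lin_comp Delta_lin (islin_mull _)).
by move=> m'; rewrite malgUU !DeltaE !lift1 DW_mul.
Qed.

Lemma Delta_g : Delta (gA K) = << tpair wg wg >>.
Proof. by rewrite DeltaE lift1 /Delta_word (_ : fmonom_val wg = [:: true]) ?big_seq1 // /wg fmuE. Qed.

Lemma Delta_x : Delta (xA K) = << tpair wx mone >> + << tpair wg wx >>.
Proof. by rewrite DeltaE lift1 /Delta_word (_ : fmonom_val wx = [:: false]) ?big_seq1 // /wx fmuE. Qed.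

Lemma one_malg (M : monomType) : (1 : {malg K[M]}) = << mone >>.
Proof. by rewrite -mpolyC1E. Qed.

Lemma Delta1 : Delta (1 : FA) = tens 1 1.
Proof.
rewrite one_malg DeltaE lift1 tensUU tpair11 -one_malg.
by rewrite /Delta_word (_ : fmonom_val mone = [::]) ?big_nil // fm1.
Qed.

Definition S n (h : FA) : FA := multn (Deltan n h).

Lemma multnE n (X : TP K n) :
  multn X = mlift (fun t : tmon n => << \big[mmul/mone]_(i < n) tmval t i >>) X.
Proof. by []. Qed.

Lemma multn_lin n : islin (@multn K n).
Proof. exact: lift_lin. Qed.

Lemma snoc_prod n (t : tmon n) v :
  \big[mmul/mone]_(i < n.+1) tmval (snoc t v) i = mmul (\big[mmul/mone]_(i < n) tmval t i) v.
Proof.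
rewrite big_ord_recr /= /snoc /= ffunE unlift_none; congr mmul.
apply: eq_bigr => i _; rewrite ffunE.
have -> : widen_ord (leqnSn n) i = lift ord_max i by apply: ord_inj; rewrite lift_max.
by rewrite liftK.
Qed.

Lemma multn_tens_word n (X : TP K n) v : multn (tens_word X v) = multn X * << v >>.
Proof.
rewrite /tens_word (_ : \sum_(t <- msupp X) X@_t *: << snoc t v >> =
   mlift (fun t => << snoc t v >>) X) //.
rewrite (lift_comp _ _ (@multn_lin n.+1)).
rewrite (_ : multn X = mlift (fun t => << \big[mmul/mone]_(i < n) tmval t i >>) X) //.
rewrite (lift_comp _ _ (islin_mulr _)); apply: lift_ext => t.
by rewrite multnE lift1 snoc_prod malgUU.
Qed.

Lemma S_succ n h : S n.+1 h =
  mlift (fun s : tmon 2 => S n << tmval s ord0 >> * << tmval s ord_max >>) (Delta h).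
Proof.
rewrite /S /= (_ : \sum_(s <- msupp (Delta h)) _ = mlift (fun s : tmon 2 =>
   tens_word (Deltan n << tmval s ord0 >>) (tmval s ord_max)) (Delta h)) //.
rewrite (lift_comp _ _ (@multn_lin n.+2)); apply: lift_ext => s.
by rewrite multn_tens_word.
Qed.

Lemma S0 h : S 0 h = h.
Proof.
rewrite /S /= /to_TP1 (_ : \sum_(w <- msupp h) _ = mlift (fun w => << single w >>) h) //.
rewrite (lift_comp _ _ (@multn_lin 1)) {2}(malg_expand h); apply: lift_ext => w.
by rewrite multnE lift1 big_ord1 /single /= ffunE.
Qed.

Lemma S_lin n : islin (S n).
Proof.
case: n => [|n] c x y; first by rewrite !S0.
by rewrite !S_succ; apply: (lin_comp Delta_lin (lift_lin _)).
Qed.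

Lemma mu_tens (F : FA -> FA) A B : islin F ->
  mlift (fun s : tmon 2 => F << tmval s ord0 >> * << tmval s ord_max >>) (tens A B)
  = F A * B.
Proof.
move=> hF; move: A.
apply: (lin_ext (f := fun A => mlift (fun s : tmon 2 => F << tmval s ord0 >> * << tmval s ord_max >>) (tens A B))
                (g := fun A => F A * B)).
- exact: (lin_comp (tens_linl _) (lift_lin _)).
- exact: (lin_comp hF (islin_mulr _)).
move=> u; move: B.
apply: (lin_ext (f := fun B => mlift (fun s : tmon 2 => F << tmval s ord0 >> * << tmval s ord_max >>) (tens << u >> B))
                (g := fun B => F << u >> * B)).
- exact: (lin_comp (tens_linr _) (lift_lin _)).
- exact: (islin_mull _).
by move=> v; rewrite tensUU lift1 tpair0 tpair1.
Qed.

End Tens.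

From mathcomp Require Import zify ring.

Section Cz.
Variable K : fieldType.
Local Notation FA := (FA K).

Lemma sum_tuple_ind n (P : pred (seq bool)) (s : seq bool) :
  \sum_(t : n.-tuple bool | P t) (((val t == s) : nat)%:R : K) = ((size s == n) && P s)%:R.
Proof.
case: (eqVneq (size s) n) => [hs|hs] /=; last first.
  rewrite big1 // => t _; case: eqP => // e; move: hs; rewrite -e size_tuple eqxx //.
pose t0 : n.-tuple bool := Tuple (introT eqP hs).
have E t : (val t == s) = (t == t0) by rewrite -val_eqE.
case Ps: (P s).
  rewrite (bigD1 t0) //= eqxx big1 ?addr0 // => t /andP[_ ne]; by rewrite E (negbTE ne).
rewrite big1 // => t Pt; rewrite E; case: eqP => // et; move: Pt; by rewrite et /= Ps.
Qed.

Lemma Ckl_coef k l (w : word) :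
  (Ckl K k l)@_w = ((size (fmonom_val w) == k + l)%N && (count id (fmonom_val w) == k))%:R.
Proof.
rewrite /Ckl raddf_sum /=.
rewrite -(sum_tuple_ind (k + l) (fun s => count id s == k)).
apply: eq_bigr => t _; rewrite mcoeffU1.
by case: w => s; rewrite fmP.
Qed.

Definition Cz_def (a b : int) : FA :=
  match a, b with Posz a', Posz b' => Ckl K a' b' | _, _ => 0 end.
Fact Cz_key : unit. Proof. by []. Qed.
Definition Cz := locked_with Cz_key Cz_def.
Lemma CzE a b : Cz a b = Cz_def a b.
Proof. by rewrite [Cz]unlock. Qed.
Lemma CzP (a b : nat) : Cz a b = Ckl K a b.
Proof. by rewrite CzE. Qed.

Definition cz (a b : int) (s : seq bool) : bool :=
  [&& 0 <= a, 0 <= b, (size s)%:Z == a + b & (count id s)%:Z == a].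

Lemma Cz_coef a b w : (Cz a b)@_w = (cz a b (fmonom_val w))%:R.
Proof.
rewrite CzE; case: a => a; case: b => b; rewrite /Cz_def ?mcoeff0 ?Ckl_coef /cz //=.
Qed.

Lemma coef_sel (M : choiceType) (A : {malg K[M]}) w0 :
  \sum_(m <- msupp A) A@_m * ((m == w0)%:R) = A@_w0.
Proof.
have := congr1 (mcoeff w0) (malg_expand A); rewrite /mlift raddf_sum /= => ->.
by apply: eq_bigr => m _; rewrite mcoeffZ mcoeffU.
Qed.

Lemma mul_lift (M : monomType) (u : M) (A : {malg K[M]}) :
  << u >> * A = mlift (fun m => << mmul u m >>) A.
Proof.
rewrite {1}(malg_expand A) (lift_comp _ _ (islin_mull _)).
by apply: lift_ext => m; rewrite malgUU.
Qed.

Lemma coef_letter c (A : FA) s :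
  (<< fmu c >> * A)@_(FMonom s) =
  if s is c' :: s' then (if c' == c then A@_(FMonom s') else 0) else 0.
Proof.
rewrite mul_lift /mlift raddf_sum /=.
under eq_bigr do rewrite mcoeffZ mcoeffU1.
have E m : (mmul (fmu c) m == FMonom s) = ((c :: fmonom_val m) == s).
  by rewrite fmP /= fmM fmU.
case: s E => [|c' s'] E.
  by rewrite big1 // => m _; rewrite E mulr0.
have [ec|ne] := eqVneq c' c.
  subst c'; rewrite ?eqxx.
  rewrite -(coef_sel A (FMonom s')); apply: eq_bigr => m _; rewrite E eqseq_cons eqxx /=.
  by rewrite fmP.
rewrite ?(negbTE ne) big1 // => m _; rewrite E eqseq_cons; case: eqP => [e|]; last by rewrite mulr0.
by move: ne; rewrite e eqxx.
Qed.

Lemma Cz_rec a b : Cz a b =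
  (if (a == 0) && (b == 0) then 1 else 0) + gA K * Cz (a - 1) b + xA K * Cz a (b - 1).
Proof.
apply/malgP => -[s]; rewrite !mcoeffD !Cz_coef /gA /xA !coef_letter.
case: s => [|c s] /=.
  rewrite (_ : cz a b [::] = (a == 0) && (b == 0)); last by rewrite /cz /=; lia.
  case: ifP => _; rewrite ?mcoeff1 ?mcoeff0 ?addr0 //.
  by rewrite (_ : FMonom [::] = mone) ?eqxx //; apply/eqP; rewrite fmP fm1.
have hc := count_size id s.
rewrite (_ : (if _ then 1 else 0)@_(FMonom (c :: s)) = 0); last first.
  case: ifP => _; rewrite ?mcoeff0 // mcoeff1.
  by case: eqP => // /(congr1 (@fmonom_val _)); rewrite fm1.
rewrite add0r Cz_coef; case: c => /=; rewrite ?Cz_coef /=.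
  rewrite addr0; congr (_ %:R); rewrite /cz /=; lia.
rewrite add0r; congr (_ %:R); rewrite /cz /=; lia.
Qed.

Lemma Cz_negl a b : a < 0 -> Cz a b = 0.
Proof. by rewrite CzE; case: a => // a; rewrite ltz_nat. Qed.
Lemma Cz_negr a b : b < 0 -> Cz a b = 0.
Proof. by rewrite CzE; case: a => a; case: b => // b; rewrite ltz_nat. Qed.

Lemma Cz00 : Cz 0 0 = 1.
Proof. by rewrite Cz_rec (@Cz_negl (0-1) 0) // (@Cz_negr 0 (0-1)) // !mulr0 !addr0. Qed.

Lemma xA_Cz j : xA K ^+ j = Cz 0 j.
Proof.
elim: j => [|j IH]; first by rewrite expr0 Cz00.
rewrite exprS IH (Cz_rec 0 j.+1) (@Cz_negl (0-1)) // mulr0 addr0 add0r.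
by rewrite (_ : j.+1%:Z - 1 = j) // intS; ring.
Qed.

End Cz.

Section Main.
Variable K : fieldType.
Local Notation FA := (FA K).
Local Notation Cz := (Cz K).
Local Notation gA := (gA K).
Local Notation xA := (xA K).

Definition PD (N : nat) (a b : int) :=
  Delta (Cz a b) = \sum_(t < N) tens (Cz (a + t%:Z) (b - t%:Z)) (Cz a t%:Z).

Lemma PD_neg N a b : (a < 0) || (b < 0) -> PD N a b.
Proof.
move=> h; rewrite /PD.
have -> : Cz a b = 0 by case/orP: h => h; [rewrite Cz_negl | rewrite Cz_negr].
rewrite (lin0 (@Delta_lin K)) big1 // => t _.
case/orP: h => h.
  by rewrite (@Cz_negl _ a) // tens0r.
by rewrite (@Cz_negr _ _ (b - t%:Z)) ?tens0l //; lia.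
Qed.

Lemma Delta_gC (X : FA) (F G : nat -> FA) N :
  Delta X = \sum_(t < N) tens (F t) (G t) ->
  Delta (gA * X) = \sum_(t < N) tens (gA * F t) (gA * G t).
Proof.
move=> hX; rewrite Delta_mul Delta_g hX mulr_sumr.
apply: eq_bigr => t _; rewrite tensM_U; reflexivity.
Qed.

Lemma Delta_xC (X : FA) (F G : nat -> FA) N :
  Delta X = \sum_(t < N) tens (F t) (G t) ->
  Delta (xA * X) = \sum_(t < N) tens (xA * F t) (G t) + \sum_(t < N) tens (gA * F t) (xA * G t).
Proof.
move=> hX; rewrite Delta_mul Delta_x hX mulrDl !mulr_sumr.
congr (_ + _); apply: eq_bigr => t _; rewrite tensM_U; last reflexivity.
rewrite -one_malg mul1r; reflexivity.
Qed.

Lemma E_abs (L R Y1 Y2 d P Q : FA) : L = Y1 + Y2 -> R = d + P + Q ->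
  tens Y1 d = 0 -> tens L R = tens Y1 P + tens Y2 R + tens Y1 Q.
Proof.
move=> eL eR h0; rewrite eL tensDl {1}eR !tensDr h0 add0r.
rewrite addrAC; reflexivity.
Qed.

Lemma big_shift (V : nmodType) (G H : nat -> V) n :
  G 0%N = 0 -> H n = 0 -> (forall t, G t.+1 = H t) ->
  \sum_(t < n.+1) G t = \sum_(t < n.+1) H t.
Proof.
move=> G0 Hn GH; rewrite big_ord_recl big_ord_recr /= G0 Hn add0r addr0.
by apply: eq_bigr => t _; rewrite /bump add1n GH.
Qed.

Lemma PD_step N a0 b0 : (0 <= a0) -> (0 <= b0) -> b0 < N%:Z ->
  (forall a b, 0 <= a -> 0 <= b -> a + b < a0 + b0 -> b < N%:Z -> PD N a b) ->
  PD N a0 b0.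
Proof.
move=> ha hb hN IH0.
have IH a b : a + b < a0 + b0 -> b < N%:Z -> PD N a b.
  move=> h1 h2; case: (boolP ((a < 0) || (b < 0))) => hn; first exact: PD_neg.
  by apply: IH0 => //; lia.
case: N hN IH IH0 => [|N] hN IH IH0; first by lia.
have [/andP[/eqP ea /eqP eb]|nz] := boolP ((a0 == 0) && (b0 == 0)).
  rewrite ea eb /PD Cz00 Delta1 big_ord_recl /= ?addr0 ?subr0 ?oppr0 Cz00.
  rewrite big1 ?addr0 //; move=> t _; rewrite Cz_negr; first exact: tens0l.
  rewrite /bump /=; lia.
rewrite /PD.
have E t : tens (Cz (a0 + t%:Z) (b0 - t%:Z)) (Cz a0 t%:Z) =
   tens (gA * Cz (a0 + t%:Z - 1) (b0 - t%:Z)) (gA * Cz (a0 - 1) t%:Z) +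
   tens (xA * Cz (a0 + t%:Z) (b0 - t%:Z - 1)) (Cz a0 t%:Z) +
   tens (gA * Cz (a0 + t%:Z - 1) (b0 - t%:Z)) (xA * Cz a0 (t%:Z - 1)).
  apply: E_abs.
  - rewrite (@Cz_rec K (a0 + t%:Z)) (_ : (a0 + t%:Z == 0) && (b0 - t%:Z == 0) = false).
      by rewrite add0r.
    by clear -ha hb nz; lia.
  - exact: (@Cz_rec K a0 t%:Z).
  case E0: ((a0 == 0) && (t%:Z == 0)); last exact: tens0r.
  move/andP: E0 => [/eqP ea /eqP et].
  rewrite Cz_negl; first by rewrite mulr0 tens0l.
  by move: et ea; clear; lia.
have IH1 : Delta (Cz (a0 - 1) b0) =
    \sum_(t < N.+1) tens (Cz (a0 + t%:Z - 1) (b0 - t%:Z)) (Cz (a0 - 1) t%:Z).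
  rewrite (IH (a0 - 1) b0); [|by clear -ha hb nz; lia|by clear -hN; lia].
  apply: eq_bigr => t _; congr (tens (Cz _ _) _); ring.
have IH2 : Delta (Cz a0 (b0 - 1)) =
    \sum_(t < N.+1) tens (Cz (a0 + t%:Z) (b0 - t%:Z - 1)) (Cz a0 t%:Z).
  rewrite (IH a0 (b0 - 1)); [|by clear -ha hb nz; lia|by clear -hN; lia].
  apply: eq_bigr => t _; congr (tens (Cz _ _) _); ring.
have L1 : Delta (Cz a0 b0) = Delta (gA * Cz (a0-1) b0) + Delta (xA * Cz a0 (b0-1)).
  rewrite {1}(@Cz_rec K a0 b0) (negbTE nz) add0r; exact: (linD (@Delta_lin K)).
have L2 := Delta_gC (F := fun t : nat => Cz (a0 + t%:Z - 1) (b0 - t%:Z))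
   (G := fun t : nat => Cz (a0 - 1) t%:Z) IH1.
have L3 := Delta_xC (F := fun t : nat => Cz (a0 + t%:Z) (b0 - t%:Z - 1))
   (G := fun t : nat => Cz a0 t%:Z) IH2.
have L4 : \sum_(t < N.+1) tens (gA * Cz (a0 + t%:Z) (b0 - t%:Z - 1)) (xA * Cz a0 t%:Z) =
          \sum_(t < N.+1) tens (gA * Cz (a0 + t%:Z - 1) (b0 - t%:Z)) (xA * Cz a0 (t%:Z - 1)).
  symmetry; apply: (big_shift (G := fun t : nat => tens (gA * Cz (a0 + t%:Z - 1) (b0 - t%:Z)) (xA * Cz a0 (t%:Z - 1)))
                   (H := fun t : nat => tens (gA * Cz (a0 + t%:Z) (b0 - t%:Z - 1)) (xA * Cz a0 t%:Z))).
  - rewrite /= (@Cz_negr _ a0 (0%:Z - 1)); last by [].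
    by rewrite mulr0 tens0r.
  - rewrite /= (@Cz_negr _ (a0 + N%:Z) (b0 - N%:Z - 1)); last by clear -hN; lia.
    by rewrite mulr0 tens0l.
  - move=> t /=.
    have e1 : a0 + (t.+1)%:Z - 1 = a0 + t%:Z by rewrite intS; ring.
    have e2 : b0 - (t.+1)%:Z = b0 - t%:Z - 1 by rewrite intS; ring.
    have e3 : (t.+1)%:Z - 1 = t%:Z by rewrite intS; ring.
    rewrite e1 e2 e3; reflexivity.
clear IH IH0 IH1 IH2.
rewrite (eq_bigr _ (fun (t : 'I_N.+1) _ => E t)).
rewrite !big_split /= L1 -addrA.
apply: (congr2 _ L2).
rewrite L3; apply: (congr2 _ (erefl _) L4).
Qed.


Lemma PD_all N a b : b < N%:Z -> PD N a b.
Proof.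
move=> hN; case: (boolP ((a < 0) || (b < 0))) => [h|h]; first exact: PD_neg.
have ha : 0 <= a by move: h; clear; lia.
have hb : 0 <= b by move: h; clear; lia.
suff H : forall (L : nat) (a b : int), 0 <= a -> 0 <= b -> a + b <= L%:Z -> b < N%:Z -> PD N a b.
  apply: (H (absz (a + b))) => //; clear -ha hb; lia.
elim=> [|L IHL] a' b' ha' hb' hL hN'; apply: PD_step => // a1 b1 ha1 hb1 hlt hN1.
  exfalso; clear -ha1 hb1 hlt hL; lia.
apply: IHL => //; clear -ha1 hb1 hlt hL; lia.
Qed.

Lemma Delta_pow i (X : FA) (F G : nat -> FA) N :
  Delta X = \sum_(t < N) tens (F t) (G t) ->
  Delta (gA ^+ i * X) = \sum_(t < N) tens (gA ^+ i * F t) (gA ^+ i * G t).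
Proof.
move=> hX; elim: i => [|i IH].
  rewrite expr0 mul1r hX; apply: eq_bigr => t _; rewrite !mul1r; reflexivity.
rewrite exprS -mulrA.
rewrite (Delta_gC (F := fun t : nat => gA ^+ i * F t)
                 (G := fun t : nat => gA ^+ i * G t) IH).
apply: eq_bigr => t _; rewrite !mulrA; reflexivity.
Qed.

Lemma Delta_giCz i N a b : b < N%:Z ->
  Delta (gA ^+ i * Cz a b) =
  \sum_(t < N) tens (gA ^+ i * Cz (a + t%:Z) (b - t%:Z)) (gA ^+ i * Cz a t%:Z).
Proof.
move=> hN; exact: (Delta_pow i (F := fun t : nat => Cz (a + t%:Z) (b - t%:Z))
                 (G := fun t : nat => Cz a t%:Z) (@PD_all N a b hN)).
Qed.

Fixpoint R (f : int -> int -> FA) (N n : nat) (a b : int) : FA :=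
  if n is n'.+1 then \sum_(t < N) R f N n' (a + t%:Z) (b - t%:Z) * f a t%:Z
  else f a b.

Lemma R_succ f N n a b : R f N n.+1 a b =
  \sum_(t < N) R f N n (a + t%:Z) (b - t%:Z) * f a t%:Z.
Proof. reflexivity. Qed.

Lemma S_R i N n : forall a b, b < N%:Z ->
  S n (gA ^+ i * Cz a b) = R (fun a b => gA ^+ i * Cz a b) N n a b.
Proof.
elim: n => [|n IH] a b hb; first by rewrite S0.
rewrite S_succ (@Delta_giCz i N a b hb) (lin_sum (lift_lin _)) R_succ.
apply: eq_bigr => t _; rewrite (mu_tens _ _ (@S_lin K n)) IH //.
by clear -hb; lia.
Qed.

Definition Pr (f : int -> int -> FA) (n : nat) (a b : int) (ks : seq nat) : FA :=
  \prod_(r < n.+1) f (a + (sumn (take (n - r) ks))%:Z)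
      (if (r == 0 :> nat) then b - (sumn ks)%:Z else (nth 0%N ks (n - r))%:Z).

Lemma Pr_nil f a b : Pr f 0 a b [::] = f a b.
Proof. by rewrite /Pr big_ord1 /= addr0 subr0. Qed.

Lemma Pr_cons f n a b t ks :
  Pr f n.+1 a b (t :: ks) = Pr f n (a + t%:Z) (b - t%:Z) ks * f a t%:Z.
Proof.
rewrite /Pr big_ord_recr /= subnn /= addr0; congr (_ * _).
apply: eq_bigr => r _ /=.
have hr : (n.+1 - r = (n - r).+1)%N by rewrite subSn // -ltnS.
rewrite hr /= PoszD addrA.
case: (r == 0 :> nat) => //.
by rewrite PoszD opprD addrA.
Qed.

Lemma ffun_split (V : nmodType) n N (F : seq nat -> V) :
  \sum_(kk : {ffun 'I_n.+1 -> 'I_N}) F [seq nat_of_ord (kk t) | t <- enum 'I_n.+1] =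
  \sum_(t < N) \sum_(kk : {ffun 'I_n -> 'I_N}) F (nat_of_ord t :: [seq nat_of_ord (kk j) | j <- enum 'I_n]).
Proof.
rewrite pair_big /=.
pose h (p : 'I_N * {ffun 'I_n -> 'I_N}) : {ffun 'I_n.+1 -> 'I_N} :=
  [ffun j => if unlift ord0 j is Some j' then p.2 j' else p.1].
pose h' (kk : {ffun 'I_n.+1 -> 'I_N}) := (kk ord0, [ffun j => kk (lift ord0 j)]).
rewrite (reindex h); last first.
  exists h' => [[t kk] _ | kk _].
    rewrite /h /h' /= ffunE unlift_none; congr (_, _); apply/ffunP => j.
    by rewrite !ffunE liftK.
  apply/ffunP => j; rewrite /h /h' ffunE; case: unliftP => [j' ->|->]; by rewrite ?ffunE.
apply: eq_bigr => -[t kk] _; congr F.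
rewrite enum_ordSl /= /h ffunE unlift_none /=; congr (_ :: _).
rewrite -map_comp; apply: eq_map => j /=; by rewrite ffunE liftK.
Qed.

Lemma R_sum f N n : forall a b, R f N n a b =
  \sum_(kk : {ffun 'I_n -> 'I_N}) Pr f n a b [seq nat_of_ord (kk t) | t <- enum 'I_n].
Proof.
elim: n => [|n IH] a b.
  transitivity (\sum_(kk : {ffun 'I_0 -> 'I_N}) Pr f 0 a b [::]).
    by rewrite sumr_const card_ffun !card_ord expn0 Pr_nil.
  by apply: eq_bigr => kk _; rewrite enum_ord0.
rewrite R_succ ffun_split; apply: eq_bigr => t _.
rewrite IH mulr_suml; apply: eq_bigr => kk _.
by rewrite Pr_cons.
Qed.

Lemma Pr_zero i n j ks : (j < sumn ks)%N -> Pr (fun a b => gA ^+ i * Cz a b) n 0 j%:Z ks = 0.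
Proof.
move=> hj; rewrite /Pr big_ord_recl /=.
rewrite (@Cz_negr _ _ (j%:Z - (sumn ks)%:Z)); first by rewrite mulr0 mul0r.
by clear -hj; lia.
Qed.

Lemma Pr_rhs i n j ks : (sumn ks <= j)%N -> size ks = n ->
  Pr (fun a b => gA ^+ i * Cz a b) n 0 j%:Z ks = rhs_term K i j n ks.
Proof.
move=> hj hs; rewrite /Pr /rhs_term; apply: eq_bigr => r _; congr (_ * _).
case: (eqVneq (nat_of_ord r) 0%N) => [r0|rn0].
  rewrite r0 subn0 take_oversize ?hs // nth_default ?hs // add0r /=.
  by rewrite subzn // CzP.
rewrite /= add0r CzP; congr (Ckl K _ _); apply: set_nth_default; rewrite hs.
have := ltn_ord r; clear -rn0; lia.
Qed.

End Main.

Lemma sumn_ks n N (kk : {ffun 'I_n -> 'I_N}) :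
  sumn [seq nat_of_ord (kk t) | t <- enum 'I_n] = (\sum_(t < n) kk t)%N.
Proof. by rewrite sumnE big_map big_enum. Qed.

Unset Implicit Arguments.

Theorem lemma2p11 (K : fieldType) (i j n : nat) : (1 <= n)%N ->
  sweedler (gA K ^+ i * xA K ^+ j) n.+1 =
  \sum_(kk : {ffun 'I_n -> 'I_j.+1} | (\sum_(t < n) kk t <= j)%N)
     rhs_term K i j n [seq nat_of_ord (kk t) | t <- enum 'I_n].
Proof.
move=> _.
have -> : sweedler (gA K ^+ i * xA K ^+ j) n.+1 = S n (gA K ^+ i * Cz K 0 j).
  by rewrite xA_Cz.
rewrite (@S_R K i j.+1 n 0 j) ?ltz_nat // R_sum.
rewrite (bigID (fun kk : {ffun 'I_n -> 'I_j.+1} => (\sum_(t < n) kk t <= j)%N)) /=.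
rewrite [X in _ + X]big1 ?addr0.
  apply: eq_bigr => kk hk; apply: Pr_rhs; last by rewrite size_map size_enum_ord.
  by rewrite sumn_ks.
move=> kk hk; apply: Pr_zero; rewrite sumn_ks; by rewrite ltnNge.
Qed.
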